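(* Let $S$ be a numerical semigroup, let $u\in\mathrm U(\mathrm{Betti}(S))$ and let $\Lambda=\{b\in\mathrm{Betti}(S): b\le_S u\}$. Let $s\in S\setminus\Lambda$ be such that $u\le_S b$ for every $b\in\mathrm{Betti}(S)\setminus\Lambda$ with $b\le_S s$. Then the subgraph of $\nabla_s$ induced on the vertex set $\mathrm B(s;\Lambda)$ is connected.
   Context: A numerical semigroup $S$ is a submonoid of $(\mathbb N,+)$ with finite complement, minimally generated by $\{n_1,\dots,n_e\}$. Write $a\le_S b$ if $b-a\in S$. Let $\varphi:\mathbb N^e\to S$, $\varphi(a)=\sum_ia_in_i$; $\mathrm Z(s)=\varphi^{-1}(s)$. $\nabla_s$ is the graph on $\mathrm Z(s)$ with distinct $x,y$ adjacent iff $x\cdot y\ne0$; $s$ is a Betti element if $\nabla_s$ is disconnected; $\mathrm{Betti}(S)$ is the set of Betti elements. For a poset $(X,\le)$, $\mathrm U(X)=\{x\in X: \{y\in X:y\le x\}\text{ is totally ordered}\}$; here $X=(\mathrm{Betti}(S),\le_S)$. A factorization $z\in\mathrm Z(s)$ is isolated if $z\cdot x=0$ for all $x\in\mathrm Z(s)\setminus\{z\}$; $\mathrm I(t)$ is the set of isolated factorizations of $t$ and $\mathrm I(\Lambda)=\bigcup_{t\in\Lambda}\mathrm I(t)$. $\mathrm I_s(S)$ is the set of $z\in\mathbb N^e$ such that $\varphi(z)$ has exactly one factorization. For $\Lambda\subseteq S$, $\mathrm B(s;\Lambda)=\{w+x_1+\cdots+x_l\in\mathrm Z(s): w\in\mathrm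 I_s(S),\ l\ge0,\ x_1,\dots,x_l\in\mathrm I(\Lambda)\}$. *)

(* Defs.v *)
From mathcomp Require Import all_boot.
From Stdlib Require Import Relations.
Set Implicit Arguments. Unset Strict Implicit. Unset Printing Implicit Defensive.

(* A numerical semigroup S given by its (candidate) minimal generators
   n_0, ..., n_{e-1}; factorizations are elements of N^e. *)
Definition fact (e : nat) := {ffun 'I_e -> nat}.

Definition phi (e : nat) (n : 'I_e -> nat) (a : fact e) : nat :=
  \sum_(i < e) a i * n i.

Definition inS (e : nat) (n : 'I_e -> nat) (s : nat) : Prop :=
  exists a : fact e, phi n a = s.

Definition min_gen_num_sgp (e : nat) (n : 'I_e -> nat) : Prop :=
  [/\ forall i, 0 < n i,
      exists N, forall m, N <= m -> inS n m
    & forall i, ~ exists a : fact e, a i = 0 /\ phi n a = n i].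

Definition leS (e : nat) (n : 'I_e -> nat) (a b : nat) : Prop :=
  exists c, inS n c /\ b = a + c.

Definition Zf (e : nat) (n : 'I_e -> nat) (s : nat) (z : fact e) : Prop :=
  phi n z = s.

Definition dot (e : nat) (x y : fact e) : nat := \sum_(i < e) x i * y i.

Definition adj (e : nat) (x y : fact e) : Prop := x <> y /\ dot x y <> 0.

Definition connected_on (T : Type) (P : T -> Prop) (R : T -> T -> Prop) : Prop :=
  forall x y, P x -> P y ->
    clos_refl_trans T (fun a b => P a /\ P b /\ R a b) x y.

Definition betti (e : nat) (n : 'I_e -> nat) (s : nat) : Prop :=
  inS n s /\ ~ connected_on (Zf n s) (@adj e).

Definition in_U_betti (e : nat) (n : 'I_e -> nat) (u : nat) : Prop :=
  betti n u /\
  forall a b, betti n a -> betti n b -> leS n a u -> leS n b u ->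
    leS n a b \/ leS n b a.

Definition isolated (e : nat) (n : 'I_e -> nat) (t : nat) (z : fact e) : Prop :=
  Zf n t z /\ forall x, Zf n t x -> x <> z -> dot z x = 0.

Definition isolated_set (e : nat) (n : 'I_e -> nat) (L : nat -> Prop) (z : fact e) : Prop :=
  exists t, L t /\ isolated n t z.

Definition Is (e : nat) (n : 'I_e -> nat) (z : fact e) : Prop :=
  forall x : fact e, phi n x = phi n z -> x = z.

Definition fsum (e : nat) (w : fact e) (xs : seq (fact e)) : fact e :=
  [ffun i => w i + \sum_(x <- xs) x i].

Definition Bset (e : nat) (n : 'I_e -> nat) (s : nat) (L : nat -> Prop) (z : fact e) : Prop :=
  Zf n s z /\
  exists (w : fact e) (xs : seq (fact e)),
    [/\ Is n w, (forall x, x \in xs -> isolated_set n L x) & z = fsum w xs].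

(* Main.v *)
Require Import Defs.
From mathcomp Require Import all_boot.
From mathcomp Require Import zify.
From Stdlib Require Import Relations Classical.
Set Implicit Arguments. Unset Strict Implicit. Unset Printing Implicit Defensive.

Definition fadd (e : nat) (a b : fact e) : fact e := [ffun i => a i + b i].
Definition unitf (e : nat) (i : 'I_e) : fact e := [ffun j => nat_of_bool (j == i)].
Definition decf (e : nat) (z : fact e) (i : 'I_e) : fact e := [ffun j => z j - (j == i)].

Lemma phi_add e (n : 'I_e -> nat) (a b : fact e) : phi n (fadd a b) = phi n a + phi n b.
Proof.
rewrite /phi -big_split /=; apply: eq_bigr => i _; by rewrite ffunE mulnDl.
Qed.

Lemma phi_unit e (n : 'I_e -> nat) (i : 'I_e) : phi n (unitf i) = n i.
Proof.
rewrite /phi (bigD1 i) //= big1 ?ffunE ?eqxx ?mul1n ?addn0 //.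
by move=> j /negbTE Hj; rewrite ffunE Hj.
Qed.

Lemma dec_unit e (z : fact e) (i : 'I_e) : 0 < z i -> fadd (decf z i) (unitf i) = z.
Proof.
move=> Hz; apply/ffunP => j; rewrite !ffunE.
case: (eqVneq j i) => [->|] /=; lia.
Qed.

Lemma phi_dec e (n : 'I_e -> nat) (z : fact e) (i : 'I_e) : 0 < z i -> phi n z = phi n (decf z i) + n i.
Proof. by move=> Hz; rewrite -{1}(dec_unit Hz) phi_add phi_unit. Qed.

Lemma term_le_dot e (x y : fact e) (i : 'I_e) : x i * y i <= dot x y.
Proof. by rewrite /dot (bigD1 i) //= leq_addr. Qed.

Lemma dot_eq0 e (x y : fact e) : dot x y = 0 -> forall i, x i * y i = 0.
Proof. move=> H i; have := term_le_dot x y i; lia. Qed.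

Lemma dot_pos e (x y : fact e) (i : 'I_e) : 0 < x i -> 0 < y i -> dot x y <> 0.
Proof. move=> Hx Hy; have := term_le_dot x y i; have := muln_gt0 (x i) (y i); rewrite Hx Hy /=; lia. Qed.

Lemma dotC e (x y : fact e) : dot x y = dot y x.
Proof. by rewrite /dot; apply: eq_bigr => i _; rewrite mulnC. Qed.

Lemma phi_pos e (n : 'I_e -> nat) (x : fact e) : 0 < phi n x -> exists i, 0 < x i.
Proof.
move=> H; apply: NNPP => Hn; move: H; rewrite /phi big1 // => i _.
have : ~ 0 < x i by move=> Hi; apply: Hn; exists i.
move=> /negP; rewrite -leqNgt leqn0 => /eqP ->; by [].
Qed.

Lemma phi0 e (n : 'I_e -> nat) (y : fact e) : (forall i, 0 < n i) -> phi n y = 0 -> forall i, y i = 0.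
Proof.
move=> Hp H i; have : y i * n i <= phi n y by rewrite /phi (bigD1 i) //= leq_addr.
rewrite H; have := Hp i; nia.
Qed.

Lemma fsum_cons e (w x : fact e) xs : fsum w (x :: xs) = fadd x (fsum w xs).
Proof. apply/ffunP => i; rewrite !ffunE big_cons; lia. Qed.

Lemma fsum_nil e (w : fact e) : fsum w [::] = w.
Proof. apply/ffunP => i; by rewrite !ffunE big_nil addn0. Qed.

Lemma inS_add e (n : 'I_e -> nat) a b : inS n a -> inS n b -> inS n (a + b).
Proof. move=> [x <-] [y <-]; exists (fadd x y); by rewrite phi_add. Qed.

Lemma betti_two e (n : 'I_e -> nat) b : betti n b ->
  exists y1 y2, Zf n b y1 /\ Zf n b y2 /\ y1 <> y2.
Proof.
move=> [_ Hc]; apply: NNPP => Hn; apply: Hc => x y Hx Hy.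
have -> : x = y by apply: NNPP => Hxy; apply: Hn; exists x, y.
exact: rt_refl.
Qed.

Definition lef (e : nat) (a b : fact e) := forall i, a i <= b i.

Lemma dot_neq0 e (x y : fact e) : dot x y <> 0 -> exists i, 0 < x i /\ 0 < y i.
Proof.
move=> H; apply: NNPP => Hn; apply: H; rewrite /dot big1 // => i _.
have : ~ (0 < x i /\ 0 < y i) by move=> Hi; apply: Hn; exists i.
case: (x i) => [|a]; case: (y i) => [|c] //=; rewrite ?muln0 //.
move=> Hc; exfalso; apply: Hc; split; by [].
Qed.

Lemma minimal e (n : 'I_e -> nat) (pos : forall i, 0 < n i) m (z1 : fact e) :
  phi n z1 <= m -> ~ Is n z1 ->
  exists z0, lef z0 z1 /\ ~ Is n z0 /\ (forall i, 0 < z0 i -> Is n (decf z0 i)).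
Proof.
elim: m z1 => [|m IH] z1 Hm Hn.
  exists z1; split; first by move=> j; exact: leqnn.
  split => // i Hi; exfalso.
  have := phi0 pos (_ : phi n z1 = 0) i; lia.
case: (classic (forall i, 0 < z1 i -> Is n (decf z1 i))) => Hq.
  by exists z1; split => // j; exact: leqnn.
have [i [Hi Hd]] : exists i, 0 < z1 i /\ ~ Is n (decf z1 i).
  apply: NNPP => H; apply: Hq => i Hi; apply: NNPP => Hd; apply: H; by exists i.
have Hp := phi_dec n Hi; have := pos i => Hpi.
have [z0 [Hle [Hn0 Hmin]]] := IH (decf z1 i) ltac:(lia) Hd.
exists z0; split => // j; apply: leq_trans (Hle j) _; rewrite ffunE; lia.
Qed.

Lemma min_isolated e (n : 'I_e -> nat) (z0 : fact e) :
  (forall i, 0 < z0 i -> Is n (decf z0 i)) ->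
  forall y, phi n y = phi n z0 -> y <> z0 -> dot z0 y = 0.
Proof.
move=> Hmin y Hy Hne; apply: NNPP => /dot_neq0 [i [H0 H1]].
apply: Hne.
have Hd : decf y i = decf z0 i.
  apply: (Hmin i H0); have := phi_dec n H0; have := phi_dec n H1; lia.
by rewrite -(dec_unit H0) -(dec_unit H1) Hd.
Qed.

Lemma rt_first (T : Type) (R : T -> T -> Prop) a c :
  clos_refl_trans T R a c -> a <> c -> exists a', R a a'.
Proof.
move=> H Hne; destruct (@clos_rt_rt1n T R a c H) as [|y z0 Hy _]; first by [].
by exists y.
Qed.

Lemma zero_Is e (n : 'I_e -> nat) (pos : forall i, 0 < n i) (z : fact e) :
  phi n z = 0 -> Is n z.
Proof.
move=> H x Hx; apply/ffunP => i.
by rewrite (phi0 pos H) (phi0 pos (etrans Hx H)).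
Qed.

Lemma peel e (n : 'I_e -> nat) (pos : forall i, 0 < n i) (L : nat -> Prop) k (z : fact e) :
  phi n z <= k -> (forall d, betti n d -> leS n d (phi n z) -> L d) ->
  exists w xs, Is n w /\ (forall x, x \in xs -> isolated_set n L x) /\ z = fsum w xs.
Proof.
elim: k z => [|k IH] z Hk HL; (case: (classic (Is n z)) => HI;
  [by exists z, [::]; split => //; split => //; rewrite fsum_nil|]).
  by exfalso; apply: HI; apply: zero_Is => //; move: Hk; rewrite leqn0 => /eqP.
have [z0 [Hle [Hn0 Hmin]]] := minimal pos (leqnn _) HI.
have [x [Hx Hxne]] : exists x, phi n x = phi n z0 /\ x <> z0.
  apply: NNPP => H; apply: Hn0 => x Hx; apply: NNPP => Hne; apply: H; by exists x.
have Hpos : 0 < phi n z0.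
  case H0: (phi n z0) => [|//]; exfalso; apply: Hxne.
  by apply: (zero_Is pos H0).
have [z1 Hz] : exists z1 : fact e, z = fadd z0 z1.
  exists [ffun i => z i - z0 i].
  apply/ffunP => i; rewrite !ffunE; by rewrite subnKC // Hle.
have Hphi : phi n z = phi n z0 + phi n z1 by rewrite {1}Hz phi_add.
have Hiso : forall y, Zf n (phi n z0) y -> y <> z0 -> dot z0 y = 0.
  by move=> y Hy Hne; exact: (min_isolated Hmin Hy Hne).
have Hb : betti n (phi n z0).
  split; first by exists z0.
  move=> Hc.
  have [a' [_ [Ha' [Hne Hd]]]] := rt_first (Hc z0 x erefl Hx) (fun H => Hxne (esym H)).
  by apply: Hd; apply: Hiso => // H; apply: Hne.
have HLb : L (phi n z0).
  apply: HL => //; exists (phi n z1); split; first by exists z1. by [].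
have HL1 : forall d, betti n d -> leS n d (phi n z1) -> L d.
  move=> d Hd [c [Hc Hce]]; apply: HL => //; exists (c + phi n z0); split.
    by apply: inS_add => //; exists z0.
  rewrite Hphi Hce; lia.
have [w [xs [Hw [Hxs Hzs]]]] := IH z1 ltac:(lia) HL1.
exists w, (z0 :: xs); split => //; split.
  move=> y; rewrite in_cons => /orP [/eqP ->|/Hxs //].
  exists (phi n z0); split => //; split => //.
by rewrite fsum_cons -Hzs.
Qed.

Lemma adj_or_eq e (a a' x : fact e) (i : 'I_e) :
  0 < x i -> x i <= a i -> x i <= a' i -> a = a' \/ adj a a'.
Proof.
move=> H0 H1 H2; case: (classic (a = a')) => [->|Hne]; [by left|right].
split => //; apply: (dot_pos (i := i)); exact: leq_trans H0 _.
Qed.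

Lemma E_rt e (P : fact e -> Prop) a c : P a -> P c -> (a = c \/ adj a c) ->
  clos_refl_trans _ (fun a c => P a /\ P c /\ adj a c) a c /\
  clos_refl_trans _ (fun a c => P a /\ P c /\ adj a c) c a.
Proof.
move=> Ha Hc [->|[Hne Hd]]; first by split; apply: rt_refl.
split; apply: rt_step => //; split => //; split => //; split.
  by move=> H; apply: Hne.
by rewrite dotC.
Qed.

Lemma betti_pos e (n : 'I_e -> nat) (pos : forall i, 0 < n i) b : betti n b -> 0 < b.
Proof.
move=> /betti_two [y1 [y2 [H1 [H2 Hne]]]]; case: b H1 H2 => [|//] H1 H2.
by exfalso; apply: Hne; apply: esym; apply: (zero_Is pos H1); rewrite H2 H1.
Qed.

Lemma Is_not_betti e (n : 'I_e -> nat) (w : fact e) b k :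
  Is n w -> betti n b -> inS n k -> phi n w = b + k -> False.
Proof.
move=> Hw /betti_two [y1 [y2 [H1 [H2 Hne]]]] [g Hg] Hwk.
have E1 : fadd y1 g = w by apply: Hw; rewrite phi_add Hwk -Hg H1.
have E2 : fadd y2 g = w by apply: Hw; rewrite phi_add Hwk -Hg H2.
apply: Hne; apply/ffunP => i.
have := congr1 (fun f : fact e => f i) (etrans E1 (esym E2)).
by rewrite /= !ffunE => /addIn.
Qed.

Lemma half e (n : 'I_e -> nat) (pos : forall i, 0 < n i) (u s : nat) (L : nat -> Prop)
  (HLdef : forall b, L b -> betti n b /\ leS n b u)
  (HnLs : ~ L s) (H5 : forall b, betti n b -> ~ L b -> leS n b s -> leS n u b)
  (z z' : fact e) (w x w' x' : fact e) (xr xr' : seq (fact e)) b b' :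
  Bset n s L z -> Bset n s L z' ->
  z = fsum w (x :: xr) -> z' = fsum w' (x' :: xr') -> Is n w' ->
  (forall y, y \in xr' -> isolated_set n L y) ->
  isolated n b x -> L b -> isolated n b' x' -> L b' -> leS n b b' ->
  clos_refl_trans _ (fun a c => Bset n s L a /\ Bset n s L c /\ adj a c) z z' /\
  clos_refl_trans _ (fun a c => Bset n s L a /\ Bset n s L c /\ adj a c) z' z.
Proof.
move=> HBz HBz' Hze Hz'e Hw' Hxr' Hisox HLb Hisox' HLb' [c [Hc Hbc]].
have [Hb Hbu] := HLdef _ HLb; have [Hb' [k1 [Hk1 Hu]]] := HLdef _ HLb'.
have [f Hf] := Hc.
set q : fact e := [ffun i => \sum_(y <- xr') y i].
have Hr : fsum w' xr' = fadd w' q by apply/ffunP => i; rewrite !ffunE.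
have Hs : s = b' + phi n w' + phi n q.
  case: HBz' => Hs _; rewrite -Hs Hz'e fsum_cons phi_add Hr phi_add.
  by case: Hisox' => -> _; rewrite addnA.
have Hxb : phi n x = b by case: Hisox.
have HLg : forall d, betti n d -> leS n d (phi n (fadd f w')) -> L d.
  move=> d Hd [k [Hk Hke]]; apply: NNPP => HLd.
  have [k2 [Hk2 Hd2]] : leS n u d.
    apply: H5 => //; exists (k + b + phi n q); split.
      by apply: inS_add; [apply: inS_add => //; exists x|exists q].
    move: Hke; rewrite phi_add Hf => Hke; lia.
  apply: (Is_not_betti Hw' Hb (k := k1 + k2 + k)).
    by apply: inS_add => //; apply: inS_add.
  move: Hke; rewrite phi_add Hf => Hke; lia.
have [w'' [xs'' [Hw'' [Hxs'' Hg]]]] := peel pos (leqnn _) HLg.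
set z'' := fsum w'' (x :: xs'' ++ xr').
have Hz'' : z'' = fadd (fadd x f) (fsum w' xr').
  apply/ffunP => i; have := congr1 (fun g : fact e => g i) Hg.
  rewrite /z'' !ffunE /= big_cons big_cat /= => H; lia.
have HBz'' : Bset n s L z''.
  split.
    rewrite /Zf Hz'' !phi_add Hf Hxb Hr phi_add Hs Hbc; lia.
  exists w'', (x :: xs'' ++ xr'); split => // y.
  rewrite in_cons mem_cat => /orP [/eqP ->|/orP [/Hxs'' //|/Hxr' //]].
  by exists b.
have Hrpos : 0 < phi n (fsum w' xr').
  case H0 : (phi n (fsum w' xr')) => [|//]; exfalso; apply: HnLs.
  move: H0; rewrite Hr phi_add => H0.
  have -> : s = b' by rewrite Hs; lia.
  by [].
have [i Hi] := phi_pos Hrpos.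
have [j Hj] : exists j, 0 < x j.
  by apply: (phi_pos (n := n)); rewrite Hxb; apply: (betti_pos pos Hb).
have E1 : z' = z'' \/ adj z' z''.
  apply: (adj_or_eq (x := fsum w' xr') (i := i)) => //.
    rewrite Hz'e fsum_cons !ffunE; lia.
  rewrite Hz'' !ffunE; lia.
have E2 : z'' = z \/ adj z'' z.
  apply: (adj_or_eq (x := x) (i := j)) => //.
    rewrite Hz'' !ffunE; lia.
  rewrite Hze fsum_cons !ffunE; lia.
have [R1 R1'] := E_rt HBz' HBz'' E1.
have [R2 R2'] := E_rt HBz'' HBz E2.
split; [exact: rt_trans R2' R1'|exact: rt_trans R1 R2].
Qed.

Theorem lemma5p8 (e : nat) (n : 'I_e -> nat) (u s : nat) :
  min_gen_num_sgp n ->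
  in_U_betti n u ->
  let L := fun b => betti n b /\ leS n b u in
  inS n s -> ~ L s ->
  (forall b, betti n b -> ~ L b -> leS n b s -> leS n u b) ->
  connected_on (Bset n s L) (@adj e).
Proof.
move=> [pos _ _] [_ HU] L HsS HnLs H5 z z' Hz Hz'.
have HLdef : forall b, L b -> betti n b /\ leS n b u by [].
move: (Hz) (Hz') => [Hzs [w [xs [Hw Hxs Hze]]]] [Hzs' [w' [xs' [Hw' Hxs' Hze']]]].
case: xs Hxs Hze => [|x xr] Hxs Hze.
  rewrite fsum_nil in Hze; subst z.
  have -> : z' = w by apply: Hw; rewrite Hzs'.
  exact: rt_refl.
case: xs' Hxs' Hze' => [|x' xr'] Hxs' Hze'.
  rewrite fsum_nil in Hze'; subst z'.
  have -> : z = w' by apply: Hw'; rewrite Hzs.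
  exact: rt_refl.
have [b [HLb Hisob]] := Hxs x (mem_head _ _).
have [b' [HLb' Hisob']] := Hxs' x' (mem_head _ _).
have [Hb Hbu] := HLb; have [Hb' Hbu'] := HLb'.
case: (HU b b' Hb Hb' Hbu Hbu') => Hle.
  have [R _] := half pos HLdef HnLs H5 Hz Hz' Hze Hze' Hw'
    (fun y Hy => Hxs' y ltac:(by rewrite in_cons Hy orbT)) Hisob HLb Hisob' HLb' Hle.
  exact: R.
have [_ R] := half pos HLdef HnLs H5 Hz' Hz Hze' Hze Hw
  (fun y Hy => Hxs y ltac:(by rewrite in_cons Hy orbT)) Hisob' HLb' Hisob HLb Hle.
exact: R.
Qed.
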